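(* For all $\alpha\in(0,\pi/4]$ and $\beta\in[0,t(\alpha)]$, $$\max_{r\in[0,1]} f_1(\alpha,\beta,r)\ \ge\ \tfrac12\sqrt{6-2\cos(4\alpha)}.$$
   Context: $f_1(\alpha,\beta,r)=\frac{2\sin\alpha}{\cos\beta(\tan\alpha+\tan\beta)}\cdot\frac{1+\frac{2\tan\beta}{\tan\alpha+\tan\beta}r}{\sqrt{1+r^2+2\cos(2\alpha)r}}$, and $t(\alpha)=\arctan\!\left(\frac{\sin(3\alpha)-\sin\alpha}{3\cos\alpha-\cos(3\alpha)}\right)$. *)

(* Defs.v *)
From Stdlib Require Import Reals.
Open Scope R_scope.

Definition f1 (a b r : R) : R :=
  (2 * sin a / (cos b * (tan a + tan b))) *
  ((1 + (2 * tan b / (tan a + tan b)) * r) /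
   sqrt (1 + r ^ 2 + 2 * cos (2 * a) * r)).

Definition t (a : R) : R :=
  atan ((sin (3 * a) - sin a) / (3 * cos a - cos (3 * a))).

(* Main.v *)
Require Import Defs.
From Stdlib Require Import Reals.
From Stdlib Require Import Lra Psatz.
Open Scope R_scope.

Lemma f1_cont (a b c : R) : 0 <= cos (2 * a) -> 0 <= c ->
  continuity_pt (fun r => f1 a b r) c.
Proof.
  intros Hc Hc0. unfold f1.
  set (K := 2 * sin a / (cos b * (tan a + tan b))).
  set (L := 2 * tan b / (tan a + tan b)).
  set (C := cos (2 * a)).
  change (continuity_pt (mult_fct (fct_cte K)
     (div_fct (plus_fct (fct_cte 1) (mult_fct (fct_cte L) id))
       (comp sqrt (fun r => 1 + r ^ 2 + 2 * C * r)))) c).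
  apply continuity_pt_mult; [apply continuity_pt_const; intros ? ?; reflexivity|].
  apply continuity_pt_div.
  - apply continuity_pt_plus; [apply continuity_pt_const; intros ? ?; reflexivity|].
    apply continuity_pt_mult; [apply continuity_pt_const; intros ? ?; reflexivity|].
    apply derivable_continuous_pt; apply derivable_pt_id.
  - apply continuity_pt_comp.
    + apply derivable_continuous_pt. reg.
    + apply continuity_pt_sqrt. unfold C in *. nra.
  - unfold comp. intro H. apply sqrt_eq_0 in H; unfold C in *; nra.
Qed.

Theorem lemma9 (a b : R) :
  0 < a <= PI / 4 -> 0 <= b <= t a ->
  exists r : R, 0 <= r <= 1 /\
    (forall s : R, 0 <= s <= 1 -> f1 a b s <= f1 a b r) /\
    f1 a b r >= / 2 * sqrt (6 - 2 * cos (4 * a)).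
Proof.
  intros Ha Hb.
  assert (HPI := PI_RGT_0).
  assert (Hc2 : 0 <= cos (2 * a)) by (apply cos_ge_0; lra).
  destruct (continuity_ab_maj (fun r => f1 a b r) 0 1 ltac:(lra)) as [M [HM HM01]].
  { intros c Hc. apply f1_cont; lra. }
  exists M. split; [exact HM01|]. split; [exact HM|].
  apply Rle_ge. apply Rle_trans with (f1 a b 0); [|apply HM; lra].
  assert (Hs : 0 < sin a) by (apply sin_gt_0; lra).
  assert (Hco : 0 < cos a) by (apply cos_gt_0; lra).
  assert (Hbt : t a < PI / 2) by (unfold t; destruct (atan_bound ((sin (3 * a) - sin a) / (3 * cos a - cos (3 * a)))); lra).
  assert (Hcb : 0 < cos b) by (apply cos_gt_0; lra).
  assert (Hsb : 0 <= sin b) by (apply sin_ge_0; lra).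
  assert (Htb : sin b / cos b <= (sin (3 * a) - sin a) / (3 * cos a - cos (3 * a))).
  { change (sin b / cos b) with (tan b).
    destruct (Rle_lt_or_eq_dec _ _ (proj2 Hb)) as [Hlt|Heq].
    - left. unfold t in Hlt. rewrite <- (tan_atan ((sin (3 * a) - sin a) / (3 * cos a - cos (3 * a)))).
      apply tan_increasing; [lra|exact Hlt|]. exact Hbt.
    - right. rewrite Heq. unfold t. rewrite tan_atan. reflexivity. }
  assert (Hpa := sin2_cos2 a). assert (Hpb := sin2_cos2 b). unfold Rsqr in Hpa, Hpb.
  set (s := sin a) in *. set (co := cos a) in *. set (sb := sin b) in *. set (cb := cos b) in *.
  assert (E2 : cos (2 * a) = co * co - s * s) by (rewrite cos_2a; reflexivity).
  assert (E3s : sin (3 * a) = 3 * s - 4 * s * s * s).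
  { replace (3 * a) with (2 * a + a) by ring. rewrite sin_plus, sin_2a, E2. fold s co. nra. }
  assert (E3c : cos (3 * a) = 4 * co * co * co - 3 * co).
  { replace (3 * a) with (2 * a + a) by ring. rewrite cos_plus, sin_2a, E2. fold s co. nra. }
  assert (E4 : cos (4 * a) = 2 * (co * co - s * s) ^ 2 - 1).
  { replace (4 * a) with (2 * (2 * a)) by ring. rewrite cos_2a_cos, E2. ring. }
  assert (HP : 0 < 3 * s * s + co * co) by nra.
  rewrite E3s, E3c in Htb.
  assert (Hden : 0 < 3 * co - (4 * co * co * co - 3 * co)) by nra.
  assert (Hcond : sb * co * (3 * s * s + co * co) <= s * (co * co - s * s) * cb).
  { apply Rmult_le_compat_r with (r := cb * (3 * co - (4 * co * co * co - 3 * co))) in Htb; [|nra].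
    replace (sb / cb * (cb * (3 * co - (4 * co * co * co - 3 * co)))) with
      (sb * (3 * co - (4 * co * co * co - 3 * co))) in Htb by (field; lra).
    replace ((3 * s - 4 * s * s * s - s) / (3 * co - (4 * co * co * co - 3 * co)) *
       (cb * (3 * co - (4 * co * co * co - 3 * co)))) with
      ((3 * s - 4 * s * s * s - s) * cb) in Htb by (field; lra).
    assert (Q1 : 3 * co - (4 * co * co * co - 3 * co) = 2 * co * (3 * s * s + co * co)).
    { replace (3 * s * s + co * co) with (3 - 2 * (co * co)) by lra. ring. }
    assert (Q2 : 3 * s - 4 * s * s * s - s = 2 * s * (co * co - s * s)).
    { replace (co * co - s * s) with (1 - 2 * (s * s)) by lra. ring. }
    rewrite Q1, Q2 in Htb. lra. }
  assert (Hf0 : f1 a b 0 = 2 * s * co / (s * cb + co * sb)).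
  { unfold f1, tan. fold s co sb cb.
    replace (1 + 0 ^ 2 + 2 * cos (2 * a) * 0) with 1 by ring. rewrite sqrt_1.
    field. repeat split; try lra; nra. }
  rewrite Hf0, E4.
  set (F := 2 * s * co / (s * cb + co * sb)).
  assert (HF : 0 < F) by (unfold F; apply Rdiv_lt_0_compat; nra).
  assert (Hsq : 6 - 2 * (2 * (co * co - s * s) ^ 2 - 1) <= (2 * F) * (2 * F)).
  { unfold F.
    assert (Hpos : 0 < s * cb + co * sb) by nra.
    replace (2 * (2 * s * co / (s * cb + co * sb)) * (2 * (2 * s * co / (s * cb + co * sb))))
      with (16 * s * s * co * co / ((s * cb + co * sb) * (s * cb + co * sb))) by (field; lra).
    idtac.
    assert (Hid : 16 * s * s * co * co * ((s * s + co * co) * (sb * sb + cb * cb))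
      - 4 * (s^4 + 6 * s * s * co * co + co^4) * (s * cb + co * sb) * (s * cb + co * sb)
      = 4 * (s * (co * co - s * s) * cb - co * (3 * s * s + co * co) * sb)
          * (co * (co * co - s * s) * sb + s * (3 * co * co + s * s) * cb)) by ring.
    rewrite Hpa, Hpb in Hid.
    assert (HX : 0 <= s * (co * co - s * s) * cb - co * (3 * s * s + co * co) * sb) by lra.
    assert (HY : 0 <= co * (co * co - s * s) * sb + s * (3 * co * co + s * s) * cb) by nra.
    assert (HXY := Rmult_le_pos _ _ HX HY).
    assert (Hpa2 : (s * s + co * co) ^ 2 = 1) by (rewrite Hpa; ring).
    assert (A1 : 6 - 2 * (2 * (co * co - s * s) ^ 2 - 1) - 4 * (s^4 + 6 * s * s * co * co + co^4)
       = 8 * (1 - (s * s + co * co) ^ 2)) by ring.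
    rewrite Hpa2 in A1.
    apply (Rmult_le_reg_r ((s * cb + co * sb) * (s * cb + co * sb))); [nra|].
    replace (16 * s * s * co * co / ((s * cb + co * sb) * (s * cb + co * sb)) *
      ((s * cb + co * sb) * (s * cb + co * sb))) with (16 * s * s * co * co) by (field; lra).
    replace (6 - 2 * (2 * (co * co - s * s) ^ 2 - 1)) with (4 * (s^4 + 6 * s * s * co * co + co^4)) by lra.
    lra. }
  apply Rle_trans with (/ 2 * sqrt ((2 * F) * (2 * F))).
  - apply Rmult_le_compat_l; [lra|]. apply sqrt_le_1_alt. exact Hsq.
  - rewrite sqrt_square by lra. lra.
Qed.
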